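(* Let $(M,d)$ be a complete metric space and $X\subseteq M$ compact. Assume that every $\mu\in P(X)$ admits a barycenter in $M$, that $Y=conv(X)$ is compact, and that at least one variance maximizing $\mu\in P(X)$ has a unique barycenter. Then the circumcenter of $X$ in $M$, which lies in $Y$, is unique.
   Context: $P(\cdot)$ denotes Borel probability measures. $Var(\mu)=\inf_{y\in M}\int_X d^2(x,y)\,d\mu(x)$, a barycenter of $\mu$ is a point of $M$ attaining this infimum, and a variance maximizing measure is a maximizer of $Var$ over $P(X)$. $conv(X)$ is the set of all barycenters of measures in $P(X)$. The circumradius of $X$ is $R=\inf_{y\in M}\sup_{x\in X}d(x,y)$, and a circumcenter of $X$ is a point $y\in M$ with $X\subseteq\bar B(y,R)$, where $\bar B(y,R)$ is the closed ball of radius $R$ about $y$. *)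

(* Defs.v *)
From HB Require Import structures.
From mathcomp Require Import all_boot all_order all_algebra.
From mathcomp Require Import all_classical all_reals all_analysis.
Set Implicit Arguments. Unset Strict Implicit. Unset Printing Implicit Defensive.
Import Order.TTheory GRing.Theory Num.Theory.
Local Open Scope classical_set_scope.
Local Open Scope ring_scope.

(* A metric space together with a distinguished point (needed by the
   library to build the Borel measurable type; harmless). *)
#[short(type="pointedMetricType")]
HB.structure Definition PointedMetric (K : numDomainType) :=
  { M of Pointed M & Metric K M }.

Section Defs.
Variables (R : realType) (M : pointedMetricType R).

Definition complete_metric : Prop :=
  forall F : set_system M, ProperFilter F -> cauchy F -> cvg F.

Definition borelM := g_sigma_algebraType (@open M).

Variable X : set M.

(* P(X): Borel probability measures on M concentrated on X
   (= Borel probability measures on the closed set X). *)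
Definition PX : set (probability borelM R) :=
  [set mu | mu (~` (X : set borelM)) = 0%E].

Definition sqdist_int (mu : probability borelM R) (y : M) : \bar R :=
  (\int[mu]_(x in (X : set borelM)) ((mdist (x : M) y) ^+ 2)%:E)%E.

Definition Var (mu : probability borelM R) : \bar R :=
  ereal_inf [set sqdist_int mu y | y in [set: M]].

Definition barycenter (mu : probability borelM R) (y : M) : Prop :=
  sqdist_int mu y = Var mu.

Definition variance_maximizing (mu : probability borelM R) : Prop :=
  PX mu /\ forall nu, PX nu -> (Var nu <= Var mu)%E.

Definition convX : set M :=
  [set y | exists2 mu, PX mu & barycenter mu y].

Definition circumradius : \bar R :=
  ereal_inf [set ereal_sup [set (mdist x y)%:E | x in X] | y in [set: M]].

Definition circumcenter (y : M) : Prop :=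
  X `<=` [set x | ((mdist y x)%:E <= circumradius)%E].

End Defs.

(* Main.v *)
Require Import Defs.
From HB Require Import structures.
From mathcomp Require Import all_boot all_order all_algebra.
From mathcomp Require Import all_classical all_reals all_analysis.
From mathcomp Require Import lra zify measurable_realfun.
Local Open Scope classical_set_scope.
Local Open Scope ring_scope.
Import Order.TTheory GRing.Theory Num.Theory numFieldTopology.Exports numFieldNormedType.Exports.

Lemma L1 (R : realType) (a s d : R) : 0 <= a -> 0 <= s -> s <= d ->
  (a + s) ^+ 2 <= (1 + d) * a ^+ 2 + (d + d ^+ 2).
Proof.
move=> a0 s0 sd.
have h1 : 2 * a * s <= 2 * a * d by nra.
have h2 : 2 * a <= a ^+ 2 + 1 by have := sqr_ge0 (a - 1); nra.
have h3 : s ^+ 2 <= d ^+ 2 by nra.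
have d0 : 0 <= d by lra.
have h4 : 2 * a * d <= (a ^+ 2 + 1) * d by nra.
nra.
Qed.

Lemma L2 (R : realType) (w a t : R) : 0 <= w -> 0 <= a -> 0 < t -> t <= 1/2 ->
  (1 - t) * a <= w -> a <= w + 2 * t * w.
Proof.
move=> w0 a0 t0 t1 h.
have h1 : (1 - t) * (a - w - 2 * t * w) <= - (w * t * (1 - 2 * t)) by nra.
have h2 : 0 <= w * t * (1 - 2 * t) by apply: mulr_ge0; nra.
have h3 : 0 < 1 - t by lra.
nra.
Qed.

Lemma L3 (R : realType) (w e : R) : 0 <= w -> 0 < e ->
  let d := e / (5 * (w + 1) + e) in 0 < d /\ d <= 1 /\ 5 * d * (w + 1) <= e.
Proof.
move=> w0 e0 d.
have k0 : 0 < 5 * (w + 1) + e by lra.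
have hd : d * (5 * (w + 1) + e) = e by rewrite /d mulfVK // gt_eqF.
split; first by rewrite /d divr_gt0.
split; nra.
Qed.

Section Helpers.
Variables (R : realType) (M : pointedMetricType R).
Local Notation T := (borelM M).

Lemma mdist_cont (y : M) : continuous (fun x : M => mdist x y).
Proof.
move=> x; apply/cvgrPdist_lt => e e0.
apply: filterS (nbhsx_ballx x e e0) => z; rewrite ballEmdist /= => xz.
have h1 := metric_triangle x z y.
have h2 := metric_triangle z x y.
rewrite (metric_sym z x) in h2.
rewrite ltr_norml; apply/andP; split; lra.
Qed.

Lemma open_meas (A : set M) : open A -> measurable (A : set T).
Proof. by move=> oA; apply: sub_sigma_algebra. Qed.

Lemma meas_sq (y : M) : measurable_fun [set: T] (fun x : T => ((mdist (x : M) y) ^+ 2)%:E).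
Proof.
apply/measurable_EFinP.
have mf : measurable_fun [set: T] (fun x : T => mdist (x : M) y).
  apply: (measurability _ (RGenOpens.measurableE R)).
  move=> _ [_ [a [b ->] <-]]; rewrite setTI.
  apply: open_meas.
  by move: (mdist_cont y) => /continuousP; apply; exact: interval_open.
by apply: measurable_funX.
Qed.


Lemma X_meas (X : set M) : compact X -> measurable (X : set T).
Proof.
move=> cX; have cl : closed X by apply: compact_closed => //; exact: metric_hausdorff.
rewrite -(setCK X); apply: measurableC; apply: open_meas; exact: closed_openC.
Qed.

Lemma PX1 (X : set M) (mu : probability T R) : measurable (X : set T) -> PX X mu -> mu X = 1%E.
Proof.
move=> mX; rewrite /PX /= probability_setC // => h.
have : (mu X \is a fin_num)%E by rewrite fin_num_measure.
move: h; case: (mu X) => //= r; rewrite -EFinB => /eqP; rewrite eqe => /eqP h _.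
by congr (_%:E); lra.
Qed.

Lemma sq_ge0 (X : set M) mu y : (0 <= sqdist_int X mu y)%E.
Proof. by apply: integral_ge0 => x _; rewrite lee_fin sqr_ge0. Qed.

Lemma int_le_cst (X : set M) (mu : probability T R) y c :
  measurable (X : set T) -> PX X mu -> 0 <= c ->
  (forall x, X x -> mdist x y ^+ 2 <= c) -> (sqdist_int X mu y <= c%:E)%E.
Proof.
move=> mX PXmu c0 h.
apply: (@le_trans _ _ (\int[mu]_(x in (X : set T)) (cst c%:E) x)%E).
  apply: ge0_le_integral => //.
  all: try (by move=> x _; rewrite lee_fin sqr_ge0).
  all: try (exact: measurable_funS (meas_sq y)).
  all: try (by move=> x Xx; rewrite lee_fin; exact: h).
rewrite (integral_cst mu mX).
have e := PX1 _ _ mX PXmu.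
have H : forall m : \bar R, m = 1%E -> (c%:E * m <= c%:E)%E by move=> m ->; rewrite mule1.
by apply: H; exact: e.
Qed.

Lemma Var_ge0 (X : set M) mu : (0 <= Var X mu)%E.
Proof. by apply: le_ereal_inf_tmp => _ [y _ <-]; exact: sq_ge0. Qed.

Lemma Var_le (X : set M) mu y : (Var X mu <= sqdist_int X mu y)%E.
Proof. by apply: ereal_inf_lbound; exists y. Qed.

Definition tw (n : nat) : R := (n.+2%:R)^-1.

Lemma tw_gt0 n : 0 < tw n.
Proof. by rewrite /tw invr_gt0 ltr0n. Qed.

Lemma tw_le1 n : tw n <= 1 / 2.
Proof.
rewrite /tw div1r lef_pV2 ?posrE ?ltr0n // ler_nat; lia.
Qed.

Definition pw n : {nonneg R} := NngNum (ltW (tw_gt0 n)).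
Lemma qw_ge0 n : 0 <= 1 - tw n.
Proof. have := tw_le1 n; lra. Qed.
Definition qw n : {nonneg R} := NngNum (qw_ge0 n).

Definition mixf (n : nat) (mu nu : probability T R) := measure_add (mscale (qw n) mu) (mscale (pw n) nu).

HB.instance Definition _ n mu nu := Measure.copy (mixf n mu nu) (measure_add (mscale (qw n) mu) (mscale (pw n) nu)).

Lemma mixf_setT n mu nu : mixf n mu nu [set: T] = 1%E.
Proof.
transitivity (mscale (qw n) mu [set: T] + mscale (pw n) nu [set: T])%E; first exact: measure_addE.
rewrite /mscale.
have H : forall a b : \bar R, a = 1%E -> b = 1%E -> ((qw n)%:num%:E * a + (pw n)%:num%:E * b = 1)%E.
  by move=> a b -> ->; rewrite !mule1 -EFinD /=; congr (_%:E); lra.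
by apply: H; exact: probability_setT.
Qed.

HB.instance Definition _ n mu nu := Measure_isProbability.Build _ _ _ (mixf n mu nu) (mixf_setT n mu nu).

Lemma mixE n mu nu A : mixf n mu nu A = ((1 - tw n)%:E * mu A + (tw n)%:E * nu A)%E.
Proof. exact: measure_addE. Qed.

Lemma mix_int n (mu nu : probability T R) (D : set T) (f : T -> \bar R) :
  measurable D -> measurable_fun D f -> (forall x, D x -> 0 <= f x)%E ->
  (\int[mixf n mu nu]_(x in D) f x =
   (1 - tw n)%:E * \int[mu]_(x in D) f x + (tw n)%:E * \int[nu]_(x in D) f x)%E.
Proof.
move=> mD mf f0.
rewrite (eq_measure_integral (measure_add (mscale (qw n) mu) (mscale (pw n) nu))); last first.
  by move=> A mA _.
by rewrite ge0_integral_measure_add // !ge0_integral_mscale.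
Qed.

Lemma int_affine (X : set M) (mu : probability T R) y k c :
  measurable (X : set T) -> PX X mu -> 0 <= k -> 0 <= c ->
  (\int[mu]_(x in (X : set T)) ((k * mdist (x : M) y ^+ 2 + c)%:E) =
   k%:E * sqdist_int X mu y + c%:E)%E.
Proof.
move=> mX PXmu k0 c0.
under eq_integral do rewrite EFinD EFinM.
have mf : measurable_fun (X : set T) (fun x : T => (mdist (x : M) y ^+ 2)%:E) by exact: measurable_funS (meas_sq y).
rewrite ge0_integralD //.
- rewrite ge0_integralZl_EFin //; last by move=> x _; rewrite lee_fin sqr_ge0.
  rewrite (integral_cst mu mX).
  have e := PX1 _ _ mX PXmu.
  have H : forall m : \bar R, m = 1%E -> (k%:E * sqdist_int X mu y + c%:E * m = k%:E * sqdist_int X mu y + c%:E)%E.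
    by move=> m ->; rewrite mule1.
  by apply: H; exact: e.
- by move=> x _; rewrite -EFinM lee_fin mulr_ge0 // sqr_ge0.
- by apply: emeasurable_funM => //; exact: measurable_cst.
Qed.

Lemma dirac_int (X : set M) (x0 : M) y : measurable (X : set T) -> X x0 ->
  (\int[@dirac _ T x0 R]_(x in (X : set T)) (mdist (x : M) y ^+ 2)%:E = (mdist x0 y ^+ 2)%:E)%E.
Proof.
move=> mX Xx0.
rewrite integral_dirac //; last by exact: measurable_funS (meas_sq y).
by rewrite diracE mem_set // mul1e.
Qed.

Lemma mix_sq n (X : set M) (mu : probability T R) x0 y : measurable (X : set T) -> X x0 ->
  sqdist_int X (mixf n mu (@dirac _ T x0 R)) y =
  ((1 - tw n)%:E * sqdist_int X mu y + (tw n)%:E * (mdist x0 y ^+ 2)%:E)%E.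
Proof.
move=> mX Xx0; rewrite /sqdist_int mix_int //.
- by rewrite dirac_int.
- exact: measurable_funS (meas_sq y).
- by move=> x _; rewrite lee_fin sqr_ge0.
Qed.

Lemma mix_PX n (X : set M) (mu : probability T R) x0 : X x0 -> PX X mu ->
  PX X (mixf n mu (@dirac _ T x0 R)).
Proof.
move=> Xx0 PXmu; rewrite /PX /= mixE.
have H : forall m m' : \bar R, m = 0%E -> m' = 0%E -> ((1 - tw n)%:E * m + (tw n)%:E * m' = 0)%E.
  by move=> m m' -> ->; rewrite !mule0 adde0.
apply: H; first exact: PXmu.
have h : (@dirac _ T x0 R (~` (X : set T)) = 0)%E by rewrite diracE memNset //= => /(_ Xx0).
exact: h.
Qed.

Lemma claim (X : set M) (mu : probability T R) (b : M) :
  measurable (X : set T) ->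
  (forall nu, PX X nu -> exists y, barycenter X nu y) ->
  compact (convX X) ->
  variance_maximizing X mu ->
  (forall y, barycenter X mu y -> b = y) ->
  forall x0, X x0 -> ((mdist x0 b ^+ 2)%:E <= Var X mu)%E.
Proof.
move=> mX hbar cY [PXmu vmax] buniq x0 Xx0.
case EW: (Var X mu) => [w| |]; last by have := Var_ge0 X mu; rewrite EW.
  2: by rewrite leey.
have w0 : 0 <= w by have := Var_ge0 X mu; rewrite EW lee_fin.
have PXn n : PX X (mixf n mu (@dirac _ T x0 R)) := mix_PX n X mu x0 Xx0 PXmu.
pose bn n := proj1_sig (cid (hbar _ (PXn n))).
have bnP n : barycenter X (mixf n mu (@dirac _ T x0 R)) (bn n).
  by rewrite /bn; case: cid.
have key n : exists a, sqdist_int X mu (bn n) = a%:E /\ a <= w + 2 * tw n * w /\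
    mdist x0 (bn n) ^+ 2 <= w.
  have h1 : (sqdist_int X (mixf n mu (@dirac _ T x0 R)) (bn n) <= w%:E)%E.
    by rewrite (bnP n) -EW; apply: vmax.
  rewrite mix_sq // in h1.
  have h2 := Var_le X mu (bn n); rewrite EW in h2.
  have t0 := tw_gt0 n; have t1 := tw_le1 n.
  have e0 := sqr_ge0 (mdist x0 (bn n)).
  move: h1 h2; case: (sqdist_int X mu (bn n)) => [a| |] h1 h2.
  - exists a; split => //.
    rewrite -EFinM -EFinM -EFinD lee_fin in h1; rewrite lee_fin in h2.
    split.
      apply: L2 => //; first lra.
      have : 0 <= tw n * mdist x0 (bn n) ^+ 2 by apply: mulr_ge0 => //; lra.
      lra.
    nra.
  - exfalso; move: h1.
    rewrite muleC gt0_mulye ?lte_fin ?subr_gt0; last by lra.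
    by rewrite addye // leye_eq.
  - by move: h2; rewrite leeNy_eq.
have [b' [_ clb']] : (convX X `&` cluster (bn @ \oo)) !=set0.
  apply: cY.
  by exists 0%N => // n _; exists (mixf n mu (@dirac _ T x0 R)).
have near n0 (del : R) : 0 < del -> exists n, (n0 <= n)%N /\ mdist b' (bn n) < del.
  move=> d0.
  have FA : (bn @ \oo) [set z | exists2 n, (n0 <= n)%N & z = bn n].
    by move: (nbhs_infty_ge n0); apply: filterS => n h; exists n.
  have [z [[n hn ->]]] := clb' _ _ FA (nbhsx_ballx b' del d0).
  by rewrite ballEmdist /= => hb; exists n.
have tsmall (del : R) : 0 < del -> exists N, forall n, (N <= n)%N -> tw n <= del.
  move=> d0; exists (Num.truncn (del^-1)) => n Nn.
  have h := truncnS_gt (del^-1).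
  have h2 : ((Num.truncn (del^-1)).+1%:R : R) <= n.+2%:R by rewrite ler_nat; lia.
  rewrite /tw -[del]invrK lef_pV2 ?posrE ?invr_gt0 ?ltr0n //; lra.
have hb' : (sqdist_int X mu b' <= w%:E)%E.
  apply/lee_addgt0Pr => e e0.
  have [dp [d1 dle]] := L3 _ _ _ w0 e0.
  move: dp d1 dle; set del := e / (5 * (w + 1) + e) => dp d1 dle.
  have [N hN] := tsmall del dp.
  have [n [Nn hn]] := near N del dp.
  have tn := hN n Nn.
  have [a [ea [ha _]]] := key n.
  have a0 : 0 <= a by have := sq_ge0 X mu (bn n); rewrite ea lee_fin.
  have t0 := tw_gt0 n.
  apply: (@le_trans _ _ (\int[mu]_(x in (X : set T)) (((1 + del) * mdist (x : M) (bn n) ^+ 2 + (del + del ^+ 2))%:E))%E).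
    apply: ge0_le_integral => //.
    all: try (by move=> x _; rewrite lee_fin sqr_ge0).
    all: try (exact: measurable_funS (meas_sq b')).
    all: try (move=> x Xx; rewrite lee_fin).
    + apply/measurable_EFinP; apply: measurable_funD => //.
      apply: measurable_funM => //.
      by apply/measurable_EFinP; exact: measurable_funS (meas_sq (bn n)).
    + have tri := metric_triangle (x : M) (bn n) b'.
      rewrite (metric_sym (bn n) b') in tri.
      have s0 := mdist_ge0 b' (bn n).
      have u0 := mdist_ge0 (x : M) b'.
      have v0 := mdist_ge0 (x : M) (bn n).
      apply: (le_trans _ (L1 _ _ _ _ v0 s0 (ltW hn))).
      nra.
  rewrite int_affine //; last first.
    by rewrite addr_ge0 ?sqr_ge0 // ltW.
    by lra.
  rewrite ea -EFinM -EFinD lee_fin.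
  have h4 : a <= w + 2 * del * w.
    have : tw n * w <= del * w by apply: ler_wpM2r.
    lra.
  have h3 : (1 + del) * a <= (1 + del) * (w + 2 * del * w).
    by apply: ler_wpM2l => //; lra.
  have h5 : del * (del * w) <= 1 * (del * w).
    by apply: ler_wpM2r => //; apply: mulr_ge0 => //; lra.
  have h6 : del * del <= 1 * del by apply: ler_wpM2r => //; lra.
  rewrite expr2; nra.
have bb' : b = b'.
  apply: buniq; rewrite /barycenter EW.
  by apply: le_anti; rewrite hb' /=; have := Var_le X mu b'; rewrite EW.
subst b'.
rewrite lee_fin; apply/ler_addgt0Pr => e e0.
have [dp [d1 dle]] := L3 _ _ _ w0 e0.
move: dp d1 dle; set del := e / (5 * (w + 1) + e) => dp d1 dle.
have [n [_ hn]] := near 0%N del dp.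
have [a [_ [_ hx0]]] := key n.
have tri := metric_triangle x0 (bn n) b.
rewrite (metric_sym (bn n) b) in tri.
have s0 := mdist_ge0 b (bn n).
have u0 := mdist_ge0 x0 b.
have v0 := mdist_ge0 x0 (bn n).
have hL := L1 _ _ _ _ v0 s0 (ltW hn).
have h1 : mdist x0 b ^+ 2 <= (mdist x0 (bn n) + mdist b (bn n)) ^+ 2.
  by rewrite !expr2; nra.
have h2 : (1 + del) * mdist x0 (bn n) ^+ 2 <= (1 + del) * w.
  by apply: ler_wpM2l => //; lra.
have h6 : del * del <= 1 * del by apply: ler_wpM2r => //; lra.
rewrite expr2 in hL; nra.
Qed.

End Helpers.

Theorem corollary3p3 (R : realType) (M : pointedMetricType R) (X : set M) :
  complete_metric M ->
  compact X ->
  (forall mu, PX X mu -> exists y, barycenter X mu y) ->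
  compact (convX X) ->
  (exists mu, variance_maximizing X mu /\ exists! y, barycenter X mu y) ->
  (exists! y, circumcenter X y) /\ (forall y, circumcenter X y -> convX X y).
Proof.
move=> _ cX hbar cY [mu [vm [b [bbar buniq]]]].
have mX := X_meas _ _ _ cX.
have cl := claim _ _ _ _ _ mX hbar cY vm buniq.
case: vm => PXmu vmax.
have A : forall c, circumcenter X c -> c = b.
  move=> c hc; apply/esym/buniq; rewrite /barycenter.
  apply/eqP; rewrite eq_le Var_le andbT.
  case EW: (Var X mu) => [w| |]; last by have := Var_ge0 _ _ X mu; rewrite EW.
    2: by rewrite leey.
  have w0 : (0 <= w)%R by have := Var_ge0 _ _ X mu; rewrite EW lee_fin.
  apply: int_le_cst => // x Xx.
  have h1 := hc x Xx.
  have h2 : (circumradius X <= ereal_sup [set (mdist x' b)%:E | x' in X])%E.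
    by apply: ereal_inf_lbound; exists b.
  have h3 : (ereal_sup [set (mdist x' b)%:E | x' in X] <= (Num.sqrt w)%:E)%E.
    apply: ge_ereal_sup => _ [x' Xx' <-]; rewrite lee_fin.
    have := cl x' Xx'; rewrite EW lee_fin => h.
    have s0 := sqrtr_ge0 w; have s2 := sqr_sqrtr w0.
    have m0 := mdist_ge0 x' b.
    rewrite !expr2 in h s2; nra.
  have := le_trans h1 (le_trans h2 h3); rewrite lee_fin => h.
  have s0 := sqrtr_ge0 w; have s2 := sqr_sqrtr w0.
  have m0 := mdist_ge0 c x.
  rewrite (metric_sym x c) !expr2; rewrite !expr2 in s2; nra.
have circb : circumcenter X b.
  move=> x Xx; apply: le_ereal_inf_tmp => _ [y _ <-].
  have hx : ((mdist x y)%:E <= ereal_sup [set (mdist x' y)%:E | x' in X])%E.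
    by apply: ereal_sup_ubound; exists x.
  case Es: (ereal_sup [set (mdist x' y)%:E | x' in X]) hx => [r| |] hx; last by [].
    2: by rewrite leey.
  have hr : forall x', X x' -> (mdist x' y <= r)%R.
    move=> x' Xx'; rewrite -lee_fin -Es.
    by apply: ereal_sup_ubound; exists x'.
  rewrite lee_fin in hx.
  have r0 : (0 <= r)%R by apply: le_trans (mdist_ge0 x y) hx.
  have h := int_le_cst _ _ _ _ y _ mX PXmu (sqr_ge0 r) (fun x' Xx' =>
    ltac:(have := hr x' Xx'; have := mdist_ge0 x' y; move=> a b'; rewrite !expr2; nra)).
  have := le_trans (cl x Xx) (le_trans (Var_le _ _ X mu y) h); rewrite lee_fin => h'.
  have m0 := mdist_ge0 b x.
  rewrite lee_fin (metric_sym b x); rewrite !expr2 in h'; nra.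
split.
  exists b; split => // c hc; exact/esym/A.
by move=> y hy; rewrite (A y hy); exists mu.
Qed.
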